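(* Let $S_A>0$, $c_{\mathrm{TX}}>0$, $\phi>0$, $\theta=\phi/c_{\mathrm{TX}}$, $B=1$, $0<\lambda<\lambda_{\mathrm{th}}=\left(\sqrt{1+1/S_A}+\sqrt{\theta}\right)^{-2}$, $v_{\mathrm{th}}(\lambda,0)=\sqrt{\lambda\theta}+\frac{\lambda}{2}+\sqrt{\lambda}\sqrt{\sqrt{\lambda\theta}+\frac{\lambda}{4}+\frac{1}{S_A}}$. For $V_k\in(0,1]$, $\zeta\geq0$, $S_M\geq0$ let $$f(\zeta,S_M,V_k)=\zeta e^{-\zeta}\frac{V_k}{1+V_k\frac{S_AS_M}{S_A+S_M}}+(1-\zeta e^{-\zeta})V_k+\lambda\zeta(1+\theta S_M),$$ and let the myopic policy $(\zeta^{(MP)}(V_k),S_M^{(MP)}(V_k))$ be a minimizer of $f(\cdot,\cdot,V_k)$ over $\zeta\geq0,S_M\geq0$ (with $S_M=0$ when $\zeta=0$). Then: (i) if $V_k\leq v_{\mathrm{th}}(\lambda,0)$, then $(\zeta^{(MP)}(V_k),S_M^{(MP)}(V_k))=(0,0)$; (ii) otherwise, $$S_M^{(MP)}(V_k)=\left(\frac{e^{-\zeta^{(MP)}(V_k)/2}}{\sqrt{\lambda\theta}}-\frac{1}{V_k}\right)\frac{V_kS_A}{1+V_kS_A},$$ and $\zeta^{(MP)}(V_k)$ is the unique $\zeta\in\left(0,\min\left\{1,2\ln\left(\frac{V_k}{\sqrt{\lambda\theta}}\right)\right\}\right)$ solving $$\frac{-V_kS_A}{1+V_kS_A}\left(V_k-e^{\zeta/2}\sqrt{\lambda\theta}\frac{2-\zeta}{1-\zeta}+\frac{e^{\zeta}}{1-\zeta}\frac{\lambda\theta}{V_k}\right)+\frac{\lambda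 e^{\zeta}}{1-\zeta}=0.$$
   Context: Decentralized sensing scheme with a single channel, in the large-network limit: $V_k$ is the fusion center's prior variance; $\zeta$ is the normalized activation probability; a transmission succeeds with probability $\zeta e^{-\zeta}$, in which case the posterior variance is $V_k/(1+V_k\frac{S_AS_M}{S_A+S_M})$ ($S_A$ ambient SNR, $S_M$ local measurement SNR), otherwise it is $V_k$; $\lambda$ is a Lagrange multiplier weighting the sensing-transmission cost. *)

(* Defs.v *)
From Stdlib Require Import Reals Lra.
Open Scope R_scope.

Definition theta (phi cTX : R) : R := phi / cTX.

Definition lambda_th (SA th : R) : R :=
  / ((sqrt (1 + / SA) + sqrt th) ^ 2).

Definition v_th (SA th lam : R) : R :=
  sqrt (lam * th) + lam / 2
  + sqrt lam * sqrt (sqrt (lam * th) + lam / 4 + / SA).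

Definition psucc (z : R) : R := z * exp (- z).

Definition fobj (SA th lam V z SM : R) : R :=
  psucc z * (V / (1 + V * (SA * SM / (SA + SM))))
  + (1 - psucc z) * V
  + lam * z * (1 + th * SM).

Definition is_myopic (SA th lam V z SM : R) : Prop :=
  0 <= z /\ 0 <= SM /\ (z = 0 -> SM = 0) /\
  (forall z' SM', 0 <= z' -> 0 <= SM' ->
     fobj SA th lam V z SM <= fobj SA th lam V z' SM').

Definition zeta_eq (SA th lam V z : R) : Prop :=
  - (V * SA) / (1 + V * SA) *
    (V - exp (z / 2) * sqrt (lam * th) * ((2 - z) / (1 - z))
       + exp z / (1 - z) * (lam * th / V))
  + lam * exp z / (1 - z) = 0.

Definition zeta_range (th lam V z : R) : Prop :=
  0 < z /\ z < Rmin 1 (2 * ln (V / sqrt (lam * th))).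

(* Main.v *)
Require Import Defs.
From Stdlib Require Import Reals Lra Psatz.
From Coquelicot Require Import Coquelicot.
Open Scope R_scope.

Lemma dfobj a th lam V S z : 0 < a -> 0 <= S -> 0 < V ->
  is_derive (fun z => fobj a th lam V z S) z
   ((exp (-z) - z*exp (-z)) * (V / (1 + V * (a * S / (a + S))) - V) + lam*(1+th*S)).
Proof. intros. unfold fobj, psucc. auto_derive; [easy| ring]. Qed.

Lemma fobj_K a th lam V z S : 0 < a -> 0 <= S -> 0 < V ->
  fobj a th lam V z S = V + z*(lam + lam*th*S - exp(-z)*(V*V*a*S/(a+(1+V*a)*S))).
Proof.
intros. unfold fobj, psucc.
assert (0 < a + S) by lra. assert (0 <= V*a*S) by (apply Rmult_le_pos; nra). assert (0 < a + (1+V*a)*S) by nra.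
replace (1 + V * (a * S / (a + S))) with ((a + (1+V*a)*S)/(a+S)) by (field; repeat split; nra).
field; repeat split; nra.
Qed.

Lemma fobj_00 a th lam V : fobj a th lam V 0 0 = V.
Proof. unfold fobj, psucc. ring. Qed.

Lemma Vdiff a V S : 0 < a -> 0 <= S -> 0 < V ->
  V / (1 + V * (a * S / (a + S))) - V = - (V*V*a*S/(a+(1+V*a)*S)).
Proof.
intros. assert (0 < a + S) by lra. assert (0 <= V*a*S) by (apply Rmult_le_pos; nra). assert (0 < a + (1+V*a)*S) by nra.
replace (1 + V * (a * S / (a + S))) with ((a + (1+V*a)*S)/(a+S)) by (field; repeat split; nra).
field; repeat split; nra.
Qed.

Lemma Kform a V S sm y e lam : 0 < a -> 0 <= S -> 0 < V -> 0 < sm ->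
  e*V*V = sm*sm*y*y ->
  lam + sm*sm*S - e*(V*V*a*S/(a+(1+V*a)*S)) =
  lam - a*sm*sm/(1+V*a)*(y-1)^2 + sm*sm/(1+V*a)*(a+(1+V*a)*S-a*y)^2/(a+(1+V*a)*S).
Proof.
intros. assert (0 <= V*a*S) by (apply Rmult_le_pos; nra). assert (0 < a + (1+V*a)*S) by nra.
replace (e*(V*V*a*S/(a+(1+V*a)*S))) with ((e*V*V)*a*S/(a+(1+V*a)*S)) by (field; repeat split; nra).
rewrite H3. field. nra.
Qed.

Lemma Kform2 a V S sm y e lam : 0 < a -> 0 <= S -> 0 < V -> 0 < sm ->
  e*V*V = sm*sm*y*y ->
  lam + sm*sm*S - e*(V*V*a*S/(a+(1+V*a)*S)) =
  lam + sm*sm/(1+V*a)*(a+(1+V*a)*S-a)*(a+(1+V*a)*S-a*y*y)/(a+(1+V*a)*S).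
Proof.
intros. assert (0 <= V*a*S) by (apply Rmult_le_pos; nra). assert (0 < a + (1+V*a)*S) by nra.
replace (e*(V*V*a*S/(a+(1+V*a)*S))) with ((e*V*V)*a*S/(a+(1+V*a)*S)) by (field; repeat split; nra).
rewrite H3. field. nra.
Qed.
Lemma vth_facts a th lam : 0 < a -> 0 < th -> 0 < lam ->
  let sm := sqrt (lam*th) in let r := sqrt lam * sqrt (sm + lam/4 + /a) in
  0 < sm /\ sm*sm = lam*th /\ 0 <= r /\ r*r = lam*(sm+lam/4+/a) /\
  v_th a th lam = sm + lam/2 + r.
Proof.
intros. assert (0 < lam*th) by nra.
assert (0 < sm) by (apply sqrt_lt_R0; lra).
assert (0 < /a) by (apply Rinv_0_lt_compat; lra).
split; [lra|]. split; [apply sqrt_sqrt; lra|].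
split. { unfold r. apply Rmult_le_pos; apply sqrt_pos. }
split. { unfold r. replace (sqrt lam * sqrt (sm + lam / 4 + / a) * (sqrt lam * sqrt (sm + lam / 4 + / a)))
  with ((sqrt lam * sqrt lam) * (sqrt (sm + lam / 4 + / a) * sqrt (sm + lam / 4 + / a))) by ring.
  rewrite !sqrt_sqrt; lra. }
unfold v_th, sm, r. reflexivity.
Qed.

Lemma thr_le a th lam V S : 0 < a -> 0 < th -> 0 < lam -> 0 < V -> 0 <= S ->
  V <= v_th a th lam ->
  0 <= lam + lam*th*S - V*V*a*S/(a+(1+V*a)*S).
Proof.
intros Ha Ht Hl HV HS Hv.
destruct (vth_facts a th lam Ha Ht Hl) as (Hsm & Hsm2 & Hr & Hr2 & Hveq).
set (sm := sqrt (lam*th)) in *. set (r := sqrt lam * sqrt (sm + lam/4 + /a)) in *.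
rewrite Hveq in Hv.
assert (Hia : a * /a = 1) by (field; lra).
assert (0 < /a) by (apply Rinv_0_lt_compat; lra).
set (P := lam*(V + /a)).
assert (HP : 0 <= P) by (unfold P; nra).
set (sp := sqrt P).
assert (Hsp : 0 <= sp) by apply sqrt_pos.
assert (Hsp2 : sp*sp = P) by (apply sqrt_sqrt; lra).
assert (HVle : V <= sm + sp).
{ destruct (Rle_lt_dec V sm). lra.
  assert (r >= lam/2) by nra.
  assert ((V-sm)*(V-sm) <= P).
  { unfold P. nra. }
  nra. }
assert (0 <= V*a*S) by (apply Rmult_le_pos; nra).
assert (HT : 0 < a + (1+V*a)*S) by nra.
assert (Hkey : (lam + sm*sm*S)*(a+(1+V*a)*S) >= a*S*(sm+sp)*(sm+sp)).
{ assert (E: lam*((lam + sm*sm*S)*(a+(1+V*a)*S) - a*S*(sm+sp)*(sm+sp)) = a*(lam - S*sm*sp)^2).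
  { assert (Hq : a*(sp*sp) = lam*(a*V+1)).
    { rewrite Hsp2. unfold P. replace (a*(lam*(V + /a))) with (lam*(a*V + a*/a)) by ring. rewrite Hia. ring. }
    apply Rminus_diag_uniq.
    transitivity ((-lam*S - S*S*sm*sm)*(a*(sp*sp) - lam*(a*V+1))). ring.
    rewrite Hq. ring. }
  assert (0 <= a*(lam - S*sm*sp)^2) by (apply Rmult_le_pos; [lra| apply pow2_ge_0]).
  nra. }
rewrite <- Hsm2.
assert (a*S*(V*V) <= a*S*((sm+sp)*(sm+sp))).
{ apply Rmult_le_compat_l. nra. nra. }
apply Rle_trans with ((lam + sm*sm*S - V*V*a*S/(a+(1+V*a)*S))*1).
- apply Rmult_le_reg_r with (a+(1+V*a)*S); [lra|].
  replace ((lam + sm * sm * S - V * V * a * S / (a + (1 + V * a) * S)) * 1 * (a + (1 + V * a) * S))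
    with ((lam + sm*sm*S)*(a+(1+V*a)*S) - V*V*a*S) by (field; lra).
  nra.
- lra.
Qed.

Lemma thr_gt a th lam V : 0 < a -> 0 < th -> 0 < lam -> 0 < V ->
  v_th a th lam < V ->
  sqrt (lam*th) < V /\ lam*(1+V*a) < a*(V - sqrt(lam*th))^2.
Proof.
intros Ha Ht Hl HV Hv.
destruct (vth_facts a th lam Ha Ht Hl) as (Hsm & Hsm2 & Hr & Hr2 & Hveq).
set (sm := sqrt (lam*th)) in *. set (r := sqrt lam * sqrt (sm + lam/4 + /a)) in *.
rewrite Hveq in Hv.
assert (Hia : a * /a = 1) by (field; lra).
assert (0 < /a) by (apply Rinv_0_lt_compat; lra).
assert (r >= lam/2) by nra.
split. lra.
assert ((V-sm)*(V-sm) > lam*(V + /a)) by nra.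
assert (a*((V-sm)*(V-sm)) > a*(lam*(V + /a))) by (apply Rmult_gt_compat_l; lra).
replace (a*(lam*(V + /a))) with (lam*(V*a + a*/a)) in H2 by ring. rewrite Hia in H2.
nra.
Qed.

Lemma exp_half w : exp (-w/2) * exp (w/2) = 1 /\ exp w = exp (w/2) * exp (w/2)
   /\ exp (-w) = exp (-w/2) * exp (-w/2).
Proof.
split; [|split]; rewrite <- exp_plus; [|f_equal; field|f_equal; field].
replace (-w/2 + w/2) with 0 by field. apply exp_0.
Qed.

Lemma zeq_equiv a th lam V w sm : 0 < a -> 0 < V -> 0 < sm ->
  sm*sm = lam*th -> sqrt (lam*th) = sm -> w < 1 ->
  (zeta_eq a th lam V w <->
   a*(sm*sm)/(1+V*a) * (V*exp(-w/2)/sm - 1)*((1-w)*(V*exp(-w/2)/sm) - 1) = lam).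
Proof.
intros Ha HV Hsm Hsm2 Hsq Hw.
destruct (exp_half w) as (H1 & H2 & _).
set (E := exp (w/2)) in *. assert (HE : 0 < E) by apply exp_pos.
assert (Hm : exp (-w/2) = /E) by (apply (Rmult_eq_reg_r E); [rewrite H1; field|]; lra).
unfold zeta_eq. rewrite H2, Hm, Hsq, <- Hsm2.
assert (0 < 1 + V*a) by nra.
assert (Hid : - (V * a) / (1 + V * a) *
   (V - E * sm * ((2 - w) / (1 - w)) + E * E / (1 - w) * (sm * sm / V)) +
   lam * (E * E) / (1 - w)
   = E*E/(1-w) * (lam - a*(sm*sm)/(1+V*a) * (V*/E/sm - 1)*((1-w)*(V*/E/sm) - 1))).
{ field. repeat split; lra. }
fold E. rewrite Hid. split; intro Hq.
- assert (E*E/(1-w) <> 0). { apply Rgt_not_eq. apply Rdiv_lt_0_compat; nra. }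
  destruct (Rmult_integral _ _ Hq). contradiction. lra.
- replace (a * (sm * sm) / (1 + V * a) * (V * / E / sm - 1) * ((1 - w) * (V * / E / sm) - 1)) with lam. ring.
Qed.

Lemma range_facts th lam V w sm : 0 < V -> 0 < sm -> sqrt (lam*th) = sm ->
  zeta_range th lam V w -> 0 < w /\ w < 1 /\ 1 < V*exp(-w/2)/sm.
Proof.
intros HV Hsm Hsq [H0 H1]. rewrite Hsq in H1.
assert (w < 1) by (apply Rlt_le_trans with (1:=H1); apply Rmin_l).
assert (w < 2*ln (V/sm)) by (apply Rlt_le_trans with (1:=H1); apply Rmin_r).
repeat split; try lra.
assert (exp (w/2) < V/sm).
{ replace (V/sm) with (exp (ln (V/sm))) by (apply exp_ln; apply Rdiv_lt_0_compat; lra).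
  apply exp_increasing. lra. }
destruct (exp_half w) as (H4 & _ & _).
assert (0 < exp (-w/2)) by apply exp_pos.
apply Rmult_lt_reg_r with (exp (w/2)). apply exp_pos.
replace (V * exp (- w / 2) / sm * exp (w / 2)) with (V/sm * (exp (-w/2) * exp (w/2))) by (field; lra).
rewrite H4. lra.
Qed.

Definition phif V sm w := (V*exp(-w/2)/sm - 1)*((1-w)*(V*exp(-w/2)/sm) - 1).

Lemma phi_mono V sm z1 z2 : 0 < V -> 0 < sm -> 0 < z1 -> z1 < z2 -> z2 < 1 ->
  1 < (1-z2)*(V*exp(-z2/2)/sm) -> phif V sm z2 < phif V sm z1.
Proof.
intros HV Hsm Hz1 H12 Hz2 Hc.
set (dphi := fun x => (V*exp(-x/2)/sm) * ((2 - x/2) - (2-x)*(V*exp(-x/2)/sm))).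
assert (D : forall x, derivable_pt_lim (phif V sm) x (dphi x)).
{ intro x. apply is_derive_Reals. unfold phif, dphi. auto_derive; [easy|]. unfold Rdiv. field. lra. }
set (pr := fun x => exist (fun l => derivable_pt_lim (phif V sm) x l) (dphi x) (D x) : derivable_pt (phif V sm) x).
destruct (MVT_cor1 (phif V sm) z1 z2 pr H12) as (c & Heq & Hc1 & Hc2).
simpl in Heq.
assert (exp (-z2/2) < exp (-c/2)) by (apply exp_increasing; lra).
assert (0 < exp (-z2/2)) by apply exp_pos.
set (y2 := V*exp(-z2/2)/sm) in *. set (y := V*exp(-c/2)/sm).
assert (y2 < y). { unfold y2, y. unfold Rdiv. apply Rmult_lt_compat_r. apply Rinv_0_lt_compat; lra. nra. }
assert (0 < y2) by (unfold y2; apply Rdiv_lt_0_compat; nra).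
assert (0 <= (1-c)*(y-y2)) by (apply Rmult_le_pos; lra).
assert (0 <= (z2-c)*y2) by (apply Rmult_le_pos; lra).
assert (1 < (1-c)*y) by nra.
assert (1 < y) by nra.
assert (dphi c < 0). { unfold dphi. fold y. nra. }
assert (0 < z2 - z1) by lra.
nra.
Qed.

Theorem corollary2 (SA cTX phi lam V zMP SMP : R) :
  0 < SA -> 0 < cTX -> 0 < phi ->
  0 < lam -> lam < lambda_th SA (theta phi cTX) ->
  0 < V -> V <= 1 ->
  is_myopic SA (theta phi cTX) lam V zMP SMP ->
  (V <= v_th SA (theta phi cTX) lam -> zMP = 0 /\ SMP = 0) /\
  (v_th SA (theta phi cTX) lam < V ->
     SMP = (exp (- zMP / 2) / sqrt (lam * theta phi cTX) - / V)
           * (V * SA / (1 + V * SA))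
     /\ zeta_range (theta phi cTX) lam V zMP
     /\ zeta_eq SA (theta phi cTX) lam V zMP
     /\ (forall z, zeta_range (theta phi cTX) lam V z ->
                   zeta_eq SA (theta phi cTX) lam V z -> z = zMP)).
Proof.
intros Ha HcTX Hphi Hl _ HV _ Hmy.
assert (Ht : 0 < theta phi cTX) by (unfold theta; apply Rdiv_lt_0_compat; lra).
set (th := theta phi cTX) in *.
destruct Hmy as (Hz & HS & Hz0 & Hmin).
set (a := SA) in *.
assert (H00 := fobj_00 a th lam V).
split.
- intro Hle.
  destruct (Rle_lt_or_eq_dec 0 zMP Hz) as [Hzp|Hze]; [exfalso| split; [lra| apply Hz0; lra]].
  assert (Hm := Hmin 0 0 (Rle_refl 0) (Rle_refl 0)). rewrite H00, fobj_K in Hm by lra.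
  assert (Hk := thr_le a th lam V SMP Ha Ht Hl HV HS Hle).
  set (X := V*V*a*SMP/(a+(1+V*a)*SMP)) in *.
  assert (He : exp (-zMP) < 1) by (rewrite <- exp_0; apply exp_increasing; lra).
  assert (0 < lam + lam*th*SMP - exp(-zMP)*X).
  { destruct (Rle_lt_or_eq_dec 0 SMP HS) as [Hs|Hs].
    - assert (0 < X). { unfold X. assert (0 <= V*a*SMP) by (apply Rmult_le_pos; nra).
        assert (0 < V*V*a) by (apply Rmult_lt_0_compat; nra).
        apply Rdiv_lt_0_compat. apply Rmult_lt_0_compat; lra. nra. }
      nra.
    - unfold X. rewrite <- Hs. unfold Rdiv. rewrite !Rmult_0_r, Rmult_0_l. nra. }
  nra.
- intro Hgt.
  destruct (thr_gt a th lam V Ha Ht Hl HV Hgt) as [HsmV Hthr].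
  assert (Hmu : 0 < lam*th) by nra.
  set (sm := sqrt (lam*th)) in *.
  assert (Hsm : 0 < sm) by (apply sqrt_lt_R0; lra).
  assert (Hsm2 : sm*sm = lam*th) by (apply sqrt_sqrt; lra).
  set (b := 1 + V*a).
  assert (Hb : 0 < b) by (unfold b; nra).
  assert (Hbelow : exists z0 S0, 0 <= z0 /\ 0 <= S0 /\ fobj a th lam V z0 S0 < V).
  { assert (Hq : 0 <= lam*b/a) by (apply Rmult_le_pos; [nra| left; apply Rinv_0_lt_compat; lra]).
    set (s := sqrt (lam*b/a)).
    assert (Hs0 : 0 <= s) by apply sqrt_pos.
    assert (Hs2 : s*s = lam*b/a) by (apply sqrt_sqrt; lra).
    assert (Hss : a*(s*s) = lam*b) by (rewrite Hs2; field; lra).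
    assert (HsV : s < V - sm).
    { fold b in Hthr. assert (a*(s*s) < a*((V-sm)*(V-sm))) by (rewrite Hss; nra).
      assert (s*s < (V-sm)*(V-sm)) by (apply Rmult_lt_reg_l with a; lra).
      nra. }
    set (z0 := (V - sm - s)/V).
    assert (Hz0p : 0 < z0) by (apply Rdiv_lt_0_compat; lra).
    set (E0 := exp (-z0/2)).
    assert (HE0 : 1 + (-z0/2) <= E0) by apply exp_ineq1_le.
    assert (HE0p : 0 < E0) by apply exp_pos.
    assert (HVE : V*E0 >= V - V*z0/2) by nra.
    assert (Hvz : V*z0 = V - sm - s) by (unfold z0; field; lra).
    set (d := V*E0 - sm).
    assert (Hd : d > s) by (unfold d; lra).
    set (S0 := a*d/(sm*b)).
    assert (HS0 : 0 <= S0) by (unfold S0; apply Rdiv_le_0_compat; nra).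
    exists z0, S0. split; [lra|split; [exact HS0|]].
    rewrite fobj_K by lra.
    set (y0 := V*E0/sm).
    destruct (exp_half z0) as (_ & _ & Hez).
    rewrite <- Hsm2.
    rewrite (Kform a V S0 sm y0 (exp (-z0)) lam Ha HS0 HV Hsm)
      by (rewrite Hez; fold E0; unfold y0; field; lra).
    fold b.
    assert (HT : a + b*S0 - a*y0 = 0) by (unfold S0, y0, d; field; lra).
    rewrite HT.
    assert (Hy : a*sm*sm/b*(y0-1)^2 = a*(d*d)/b) by (unfold y0, d; field; lra).
    rewrite Hy.
    assert (a*(d*d) > a*(s*s)) by (apply Rmult_gt_compat_l; nra).
    assert (a*(d*d)/b > lam) by (apply Rmult_gt_reg_r with b; [lra|]; unfold Rdiv; rewrite Rmult_assoc, Rinv_l; lra).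
    assert (0 < a + b*S0) by nra. replace (sm*sm/b*0^2/(a+b*S0)) with 0 by (field; lra). nra. }
  destruct Hbelow as (z0 & S0 & Hz0' & HS0 & Hf0).
  assert (HfV : fobj a th lam V zMP SMP < V) by (apply Rle_lt_trans with (2:=Hf0); apply Hmin; lra).
  assert (Hzp : 0 < zMP).
  { destruct (Rle_lt_or_eq_dec 0 zMP Hz) as [|Hze]; [lra|].
    rewrite <- Hze, (Hz0 (eq_sym Hze)), H00 in HfV. lra. }
  set (z := zMP) in *. set (S := SMP) in *.
  destruct (exp_half z) as (Hh1 & Hh2 & Hh3).
  set (E := exp (-z/2)) in *.
  assert (HE : 0 < E) by apply exp_pos.
  set (y := V*E/sm).
  assert (Hy0 : 0 < y) by (unfold y; apply Rdiv_lt_0_compat; nra).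
  assert (HeV : exp (-z)*V*V = sm*sm*y*y) by (rewrite Hh3; unfold y; field; lra).
  set (T := a + b*S).
  assert (HT : a <= T) by (unfold T; nra).
  assert (HK : forall S', 0 <= S' -> fobj a th lam V z S' = V + z*(lam + sm*sm/b*(a+b*S'-a)*(a+b*S'-a*y*y)/(a+b*S'))).
  { intros S' HS'. rewrite fobj_K by lra. rewrite <- Hsm2.
    rewrite (Kform2 a V S' sm y (exp (-z)) lam Ha HS' HV Hsm HeV). reflexivity. }
  assert (HK2 : forall S', 0 <= S' -> fobj a th lam V z S' = V + z*(lam - a*sm*sm/b*(y-1)^2 + sm*sm/b*(a+b*S'-a*y)^2/(a+b*S'))).
  { intros S' HS'. rewrite fobj_K by lra. rewrite <- Hsm2.
    rewrite (Kform a V S' sm y (exp (-z)) lam Ha HS' HV Hsm HeV). reflexivity. }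
  assert (Hy1 : 1 < y).
  { destruct (Rlt_or_le 1 y) as [|Hy]; [assumption|exfalso].
    rewrite (HK S HS) in HfV. fold T in HfV.
    assert (0 <= sm*sm/b*(T-a)*(T-a*y*y)/T).
    { apply Rdiv_le_0_compat; [|lra]. apply Rmult_le_pos. apply Rmult_le_pos.
      apply Rdiv_le_0_compat; nra. lra. assert (y*y <= 1) by nra. nra. }
    nra. }
  set (Sst := a*(y-1)/b).
  assert (HSst : 0 < Sst) by (unfold Sst; apply Rdiv_lt_0_compat; nra).
  assert (HSeq : S = Sst).
  { assert (Hm := Hmin z Sst Hz (Rlt_le _ _ HSst)).
    rewrite (HK2 S HS), (HK2 Sst (Rlt_le _ _ HSst)) in Hm.
    assert (Hst : a + b*Sst - a*y = 0) by (unfold Sst; field; lra).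
    rewrite Hst in Hm. fold T in Hm.
    assert (Hq : sm*sm/b*(T-a*y)^2/T <= 0).
    { assert (0 < a + b*Sst) by nra.
      replace (sm*sm/b*0^2/(a+b*Sst)) with 0 in Hm by (field; lra).
      assert (z*(sm*sm/b*(T-a*y)^2/T) <= 0) by nra.
      nra. }
    assert (0 <= sm*sm/b*(T-a*y)^2/T) by (apply Rdiv_le_0_compat; [apply Rmult_le_pos; [apply Rdiv_le_0_compat; nra| apply pow2_ge_0]|lra]).
    assert (Hz2 : sm*sm/b*(T-a*y)^2/T = 0) by lra.
    assert (Hz3 : (T-a*y)^2 = 0).
    { apply Rmult_eq_reg_l with (sm*sm/b/T). rewrite Rmult_0_r. rewrite <- Hz2. field. split; lra.
      apply Rgt_not_eq. apply Rdiv_lt_0_compat; [apply Rdiv_lt_0_compat; nra|lra]. }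
    assert (T - a*y = 0) by nra.
    unfold Sst. unfold T in *. apply (Rmult_eq_reg_l b); [|lra]. field_simplify; lra. }
  assert (Hdiff := dfobj a th lam V S z Ha HS HV).
  apply is_derive_Reals in Hdiff.
  set (D := (exp (-z) - z*exp (-z)) * (V / (1 + V * (a * S / (a + S))) - V) + lam*(1+th*S)) in Hdiff.
  set (h := fun z0 => fobj a th lam V z0 S) in Hdiff.
  assert (HD0 : D = 0).
  { set (pr := exist (fun l => derivable_pt_lim h z l) D Hdiff : derivable_pt h z).
    assert (Hd := deriv_minimum h 0 (2*z) z pr Hzp ltac:(lra)
       (fun x Hx1 Hx2 => Hmin x S ltac:(lra) HS)).
    exact Hd. }
  unfold D in HD0. rewrite Vdiff in HD0 by lra. fold b in HD0.
  assert (HX : V*V*a*S/(a+b*S) = V*V*a*(y-1)/(b*y)).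
  { rewrite HSeq. unfold Sst, y.
    replace (a + b * (a * (V * E / sm - 1) / b)) with (a*(V*E/sm)) by (field; lra).
    assert (0 < V*E) by nra. field. repeat split; lra. }
  rewrite HX in HD0.
  assert (HF2 : lam + sm*sm*S = (1-z)*(sm*sm*y)*(a*(y-1)/b)).
  { replace (sm*sm*y) with ((exp(-z)*V*V)/y) by (rewrite HeV; field; lra).
    replace ((1-z)*(exp (-z)*V*V/y)*(a*(y-1)/b)) with ((exp(-z) - z*exp(-z))*(V*V*a*(y-1)/(b*y))) by (field; lra).
    rewrite Hsm2. nra. }
  assert (Hz1 : z < 1).
  { assert (0 < sm*sm*S) by (rewrite HSeq; apply Rmult_lt_0_compat; nra).
    assert (0 < sm*sm*y*(a*(y-1)/b)).
    { apply Rmult_lt_0_compat. apply Rmult_lt_0_compat; nra. apply Rdiv_lt_0_compat; nra. }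
    nra. }
  assert (Hphi0 : a*(sm*sm)/(1+V*a) * (V*exp(-z/2)/sm - 1)*((1-z)*(V*exp(-z/2)/sm) - 1) = lam).
  { fold E y b. rewrite HSeq in HF2. unfold Sst in HF2.
    assert (Hl2 : lam = (1-z)*(sm*sm*y)*(a*(y-1)/b) - sm*sm*(a*(y-1)/b)) by lra.
    rewrite Hl2. field. lra. }
  assert (Hsq : sqrt (lam*th) = sm) by reflexivity.
  assert (Hrange : zeta_range th lam V z).
  { split; [lra|]. apply Rmin_glb_lt; [lra|]. fold sm.
    assert (exp (z/2) < V/sm).
    { assert (E*exp(z/2) = 1) by exact Hh1.
      apply Rmult_lt_reg_r with E; [lra|]. rewrite Rmult_comm, H.
      replace (V/sm*E) with y by (unfold y; field; lra). lra. }
    assert (z/2 < ln (V/sm)).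
    { rewrite <- (ln_exp (z/2)). apply ln_increasing; [apply exp_pos|lra]. }
    lra. }
  repeat split.
  + rewrite HSeq. unfold Sst, y, b. field. repeat split; nra.
  + exact (proj1 Hrange).
  + exact (proj2 Hrange).
  + apply (proj2 (zeq_equiv a th lam V z sm Ha HV Hsm Hsm2 Hsq Hz1)). exact Hphi0.
  + intros w Hw Hweq.
    destruct (range_facts th lam V w sm HV Hsm Hsq Hw) as (Hw0 & Hw1 & Hwy).
    apply (zeq_equiv a th lam V w sm Ha HV Hsm Hsm2 Hsq Hw1) in Hweq.
    assert (Hk : 0 < a*(sm*sm)/(1+V*a)) by (apply Rdiv_lt_0_compat; nra).
    assert (Hpos : forall u, 1 < V*exp(-u/2)/sm -> a*(sm*sm)/(1+V*a) * (V*exp(-u/2)/sm - 1)*((1-u)*(V*exp(-u/2)/sm) - 1) = lam ->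
               1 < (1-u)*(V*exp(-u/2)/sm)).
    { intros u H1 H2. destruct (Rlt_or_le 1 ((1-u)*(V*exp(-u/2)/sm))) as [|H3]; [assumption|].
      assert (0 < a*(sm*sm)/(1+V*a) * (V*exp(-u/2)/sm - 1)) by nra. nra. }
    assert (Hyz : 1 < V*exp(-z/2)/sm) by (fold E; exact Hy1).
    assert (Pw : phif V sm w = lam / (a*(sm*sm)/(1+V*a))) by (unfold phif; rewrite <- Hweq; field; repeat split; nra).
    assert (Pz : phif V sm z = lam / (a*(sm*sm)/(1+V*a))) by (unfold phif; rewrite <- Hphi0; field; repeat split; nra).
    destruct (Rtotal_order w z) as [Hlt|[Heq|Hgt']]; [exfalso| exact Heq | exfalso].
    * assert (H := phi_mono V sm w z HV Hsm Hw0 Hlt Hz1 (Hpos z Hyz Hphi0)). lra.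
    * assert (H := phi_mono V sm z w HV Hsm Hzp Hgt' Hw1 (Hpos w Hwy Hweq)). lra.
Qed.
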